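(* Let $c>0$. There exist constants $T_0>0$ and $r_0>0$ depending only on $c$ such that for all $T\ge T_0$ and all integers $\ell\ge1$, $$F_{T-r_0,c,\ell}\setminus C_\ell\ \subseteq\ E_{T,c}\setminus C_0\ \subseteq\ F_{T+r_0,c}.$$
   Context: $\mathcal C=\{x\in\mathbb R^{n+2}: x_1^2+\dots+x_{n+1}^2=x_{n+2}^2,\ x_{n+2}>0\}$, $n\ge1$. For $T,c>0$: $E_{T,c}=\{x\in\mathcal C:2x_{n+2}(x_{n+2}-x_{n+1})<c^2,\ 1\le x_{n+2}<\cosh T\}$; $F_{T,c}=\{x\in\mathcal C:x_{n+2}^2-x_{n+1}^2<c^2,\ c\le x_{n+2}+x_{n+1}<ce^T\}$; for integers $\ell\ge1$, $c_\ell=c\,(\ell/(\ell+1))^{1/2}$ and $F_{T,c,\ell}=\{x\in\mathcal C:x_{n+2}^2-x_{n+1}^2<c_\ell^2,\ c\le x_{n+2}+x_{n+1}<ce^T\}$; $C_0=\{x\in\mathcal C:x_{n+2}\le \tfrac{c^2+c}2+1\}$ and $C_\ell=\{x\in\mathcal C:|x_{n+1}|/x_{n+2}\le \ell/(\ell+1)\}\cup C_0$. *)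

(* Defs.v *)
From Stdlib Require Import Reals.
Open Scope R_scope.

(* A point x in R^{n+2} is a function x : nat -> R; the paper's coordinate
   x_k (1 <= k <= n+2) is x (k-1). Coordinates with index >= n+2 are ignored. *)

(* sum_{k=1}^{n+1} x_k^2 = sum_{i=0}^{n} (x i)^2 *)
Definition sqsum (n : nat) (x : nat -> R) : R := sum_f_R0 (fun i => (x i) ^ 2) n.

Definition xa (n : nat) (x : nat -> R) : R := x n.
Definition xb (n : nat) (x : nat -> R) : R := x (S n).

Definition cone (n : nat) (x : nat -> R) : Prop :=
  sqsum n x = (xb n x) ^ 2 /\ 0 < xb n x.

Definition E_set (n : nat) (T c : R) (x : nat -> R) : Prop :=
  cone n x /\ 2 * xb n x * (xb n x - xa n x) < c ^ 2
  /\ 1 <= xb n x /\ xb n x < cosh T.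

Definition F_set (n : nat) (T c : R) (x : nat -> R) : Prop :=
  cone n x /\ (xb n x) ^ 2 - (xa n x) ^ 2 < c ^ 2
  /\ c <= xb n x + xa n x /\ xb n x + xa n x < c * exp T.

Definition c_ell (c : R) (l : nat) : R := c * sqrt (INR l / INR (l + 1)).

Definition F_set_l (n : nat) (T c : R) (l : nat) (x : nat -> R) : Prop :=
  cone n x /\ (xb n x) ^ 2 - (xa n x) ^ 2 < (c_ell c l) ^ 2
  /\ c <= xb n x + xa n x /\ xb n x + xa n x < c * exp T.

Definition C0_set (n : nat) (c : R) (x : nat -> R) : Prop :=
  cone n x /\ xb n x <= (c ^ 2 + c) / 2 + 1.

Definition Cl_set (n : nat) (c : R) (l : nat) (x : nat -> R) : Prop :=
  (cone n x /\ Rabs (xa n x) / xb n x <= INR l / INR (l + 1)) \/ C0_set n c x.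

(* Main.v *)
Require Import Defs.
From Stdlib Require Import Reals Lra Psatz.
Open Scope R_scope.

Lemma cone_ab n x : cone n x -> - xb n x <= xa n x <= xb n x /\ 0 < xb n x.
Proof.
  intros [H Hb]. unfold sqsum in H.
  assert (Ha : xa n x ^ 2 <= xb n x ^ 2).
  { rewrite <- H. unfold xa. destruct n as [|m]; simpl; [lra|].
    assert (0 <= sum_f_R0 (fun i => x i ^ 2) m) by (apply cond_pos_sum; intro; nra).
    simpl in H0. lra. }
  split; [|lra]. split; nra.
Qed.

Lemma k_facts l : (1 <= l)%nat -> 0 <= INR l / INR (l + 1) < 1.
Proof.
  intro Hl. assert (H1 : 0 < INR l) by (apply lt_0_INR; lia).
  rewrite plus_INR. simpl. split.
  - unfold Rdiv; apply Rmult_le_pos; [lra|]; left; apply Rinv_0_lt_compat; lra.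
  - apply (Rmult_lt_reg_r (INR l + 1)); [lra|]. field_simplify; lra.
Qed.

Theorem lemma2p1 :
  forall c : R, 0 < c ->
  exists T0 r0 : R, 0 < T0 /\ 0 < r0 /\
    forall (n : nat), (1 <= n)%nat ->
    forall (T : R) (l : nat), T0 <= T -> (1 <= l)%nat ->
      (forall x : nat -> R,
         F_set_l n (T - r0) c l x /\ ~ Cl_set n c l x ->
         E_set n T c x /\ ~ C0_set n c x) /\
      (forall x : nat -> R,
         E_set n T c x /\ ~ C0_set n c x -> F_set n (T + r0) c x).
Proof.
  intros c Hc. exists 1, (2 / c + 2 * c).
  assert (Hr : 0 < 2 / c + 2 * c) by (assert (0 < 2/c) by (apply Rdiv_lt_0_compat; lra); lra).
  split; [lra|]. split; [exact Hr|].
  intros n Hn T l HT Hl.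
  assert (Her := exp_ineq1 (2 / c + 2 * c) ltac:(lra)).
  assert (Hc2 : 2 / c * c = 2) by (field; lra).
  assert (HeT := exp_pos T).
  assert (HemT := exp_pos (-T)).
  split.
  - intros x [[Hcone [H1 [H2 H3]]] HnC].
    destruct (cone_ab _ _ Hcone) as [[Ha1 Ha2] Hb].
    set (a := xa n x) in *. set (b := xb n x) in *.
    assert (HnC0 : ~ C0_set n c x) by (intro; apply HnC; right; auto).
    assert (Hb0 : b > (c ^ 2 + c) / 2 + 1).
    { destruct (Rle_or_lt b ((c ^ 2 + c) / 2 + 1)) as [h|h]; auto.
      exfalso; apply HnC0; split; auto. }
    destruct (k_facts l Hl) as [Hk0 Hk1].
    set (k := INR l / INR (l + 1)) in *.
    assert (Hkk : Rabs a / b > k).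
    { destruct (Rle_or_lt (Rabs a / b) k) as [h|h]; auto.
      exfalso; apply HnC; left; split; auto. }
    assert (Hce : c_ell c l ^ 2 = c ^ 2 * k).
    { unfold c_ell. fold k. simpl. rewrite !Rmult_1_r.
      replace (c * sqrt k * (c * sqrt k)) with (c * c * (sqrt k * sqrt k)) by ring.
      rewrite sqrt_sqrt; auto. }
    rewrite Hce in H1.
    assert (Hcb : c < b) by nra.
    assert (Hapos : 0 < a).
    { destruct (Rle_or_lt a 0) as [h|h]; auto. exfalso.
      assert ((b - a) * (b + a) >= b * c) by nra. nra. }
    rewrite Rabs_right in Hkk by lra.
    assert (Hakb : a > k * b).
    { apply (Rmult_gt_compat_r b) in Hkk; auto.
      unfold Rdiv in Hkk. rewrite Rmult_assoc, Rinv_l in Hkk by lra. lra. }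
    split; [|exact HnC0].
    split; [exact Hcone|]. split; [|split].
    + destruct (Rle_or_lt (c ^ 2) (2 * b * (b - a))) as [h|h]; auto. { exfalso.
      assert (X : (b + a) * (2 * b * (b - a)) >= (b + a) * c ^ 2) by nra.
      assert (Y : (b + a) * c ^ 2 > (1 + k) * b * c ^ 2) by nra.
      assert (Z : (1 + k) * b * c ^ 2 >= 2 * k * b * c ^ 2) by nra.
      assert (W : 2 * b * (b * b - a * a) < 2 * b * (c ^ 2 * k)) by nra.
      nra. }
    + change (1 <= b). nra.
    + change (b < cosh T). unfold cosh.
      assert (E : exp (T - (2 / c + 2 * c)) * exp (2 / c + 2 * c) = exp T).
      { rewrite <- exp_plus. f_equal. ring. }
      assert (P := exp_pos (T - (2 / c + 2 * c))).
      assert (c * exp (T - (2 / c + 2 * c)) * 2 <= exp T) by nra.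
      lra.
  - intros x [[Hcone [H1 [H2 H3]]] HnC0].
    destruct (cone_ab _ _ Hcone) as [[Ha1 Ha2] Hb].
    set (a := xa n x) in *. set (b := xb n x) in *.
    assert (Hb0 : b > (c ^ 2 + c) / 2 + 1).
    { destruct (Rle_or_lt b ((c ^ 2 + c) / 2 + 1)) as [h|h]; auto.
      exfalso; apply HnC0; split; auto. }
    split; [exact Hcone|]. split; [|split].
    + change (b ^ 2 - a ^ 2 < c ^ 2). nra.
    + change (c <= b + a). assert (b * (b - a) * 2 < c ^ 2) by lra.
      assert (b - a < c ^ 2 / 2).
      { destruct (Rle_or_lt (c ^ 2 / 2) (b - a)) as [h|h]; auto. nra. }
      nra.
    + change (b + a < c * exp (T + (2 / c + 2 * c))). unfold cosh in H3.
      assert (exp (- T) < exp T) by (apply exp_increasing; lra).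
      rewrite exp_plus.
      assert (c * exp (2 / c + 2 * c) > 2) by nra.
      nra.
Qed.
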